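(* For integers $\lambda,k,\ell\ge0$ set \[ a_{\lambda,k,\ell} = 4^\lambda \sum_{2^\lambda\leq t<2^{\lambda+1}} \delta(\lambda+1-k,t)\,\delta(\lambda+1-\ell,t). \] Then the generating function $A(x,y,z) = \sum_{\lambda,k,\ell\ge 0} a_{\lambda,k,\ell} x^\lambda y^k z^\ell$ is given by \[ A(x,y,z) = \frac 1{(2-y)(2-z)} \cdot \frac{1+\frac {xz^2}{1-2xz(1+yz)}+\frac{xy^2}{1-2xy(1+yz)}} {1-x(1+yz)^2-\frac{xyz}{1-2xz(1+yz)}-\frac {xyz}{1-2xy(1+yz)}}. \] Furthermore, for every $\lambda\ge0$, \[ \sum_{2^\lambda\leq t<2^{\lambda+1}}c_t^2 = \frac 1{4^\lambda}\sum_{0\le k,\ell\leq \lambda+1}a_{\lambda,k,\ell} \quad\text{and}\quad \sum_{2^\lambda\leq t<2^{\lambda+1}}\tilde c_t^2 = \frac 1{4^\lambda}\sum_{0\le k,\ell\leq \lambda}a_{\lambda,k,\ell}, \] so that \[ \frac 1{2^\lambda} \sum_{2^\lambda\leq t<2^{\lambda+1}}c_t^2 = \frac 1{8^\lambda} \left[x^{\lambda} y^{\lambda+1} z^{\lambda+1}\right] \frac{A(x,y,z)}{(1-y)(1-z)} \] and \[ \frac 1{2^\lambda} \sum_{2^\lambda\leq t<2^{\lambda+1}}\tilde c_t^2 = \frac 1{8^\lambda} \left[x^{\lambda} y^{\lambda} z^{\lambda}\right] \frac{A(x,y,z)}{(1-y)(1-z)}. \]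
   Context: $s(n)$ denotes the binary sum of digits of $n\ge0$. For $k\in\mathbb{Z}$ and $t\ge0$, $\delta(k,t)$ is the asymptotic density of $\{n\ge0: s(n+t)-s(n)=k\}$ (it exists). For $t\ge0$, $c_t$ (resp. $\tilde c_t$) is the asymptotic density of $\{n\ge0: s(n+t)\ge s(n)\}$ (resp. $\{n\ge 0: s(n+t)>s(n)\}$). $[x^ay^bz^c]$ denotes extraction of the coefficient of $x^ay^bz^c$ in a formal power series. *)

(* Defs.v *)
From Stdlib Require Import Reals Lra Lia ZArith Arith List.
From Coquelicot Require Import Coquelicot.
Import ListNotations.
Open Scope R_scope.

Definition sumR (f : nat -> R) (l : list nat) : R :=
  fold_right (fun t acc => f t + acc) 0 l.

(* s(n): binary sum of digits of n (bits of n beyond index n are 0) *)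
Definition s (n : nat) : nat :=
  fold_right (fun i acc => (Nat.b2n (Nat.testbit n i) + acc)%nat) 0%nat (seq 0 (S n)).

Definition cnt (P : nat -> bool) (N : nat) : nat := length (filter P (seq 0 N)).

(* asymptotic density (the limit of #{n<N : P n}/N, which exists in all uses below) *)
Definition density (P : nat -> bool) : R :=
  real (Lim_seq (fun N => INR (cnt P N) / INR N)).

Definition delta (k : Z) (t : nat) : R :=
  density (fun n => Z.eqb (Z.of_nat (s (n + t)) - Z.of_nat (s n)) k).

Definition c (t : nat) : R := density (fun n => Nat.leb (s n) (s (n + t))).
Definition ct (t : nat) : R := density (fun n => Nat.ltb (s n) (s (n + t))).

Definition block (lam : nat) : list nat := seq (2 ^ lam) (2 ^ lam).

Definition a (lam k l : nat) : R :=
  4 ^ lam * sumR (fun t => delta (Z.of_nat (lam + 1) - Z.of_nat k) t *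
                           delta (Z.of_nat (lam + 1) - Z.of_nat l) t) (block lam).

(* f i j k = coefficient of x^i y^j z^k *)
Definition fps := nat -> nat -> nat -> R.

Definition fconst (r : R) : fps := fun i j k =>
  match i, j, k with 0, 0, 0 => r | _, _, _ => 0 end.
Definition fX : fps := fun i j k =>
  match i, j, k with 1, 0, 0 => 1 | _, _, _ => 0 end.
Definition fY : fps := fun i j k =>
  match i, j, k with 0, 1, 0 => 1 | _, _, _ => 0 end.
Definition fZ : fps := fun i j k =>
  match i, j, k with 0, 0, 1 => 1 | _, _, _ => 0 end.
Definition fadd (f g : fps) : fps := fun i j k => f i j k + g i j k.
Definition fsub (f g : fps) : fps := fun i j k => f i j k - g i j k.
Definition fscale (r : R) (f : fps) : fps := fun i j k => r * f i j k.
Definition fmul (f g : fps) : fps := fun i j k =>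
  sumR (fun i1 => sumR (fun j1 => sumR (fun k1 =>
      f i1 j1 k1 * g (i - i1)%nat (j - j1)%nat (k - k1)%nat)
    (seq 0 (S k))) (seq 0 (S j))) (seq 0 (S i)).
Fixpoint fpow (f : fps) (n : nat) : fps :=
  match n with O => fconst 1 | S m => fmul f (fpow f m) end.

(* Multiplicative inverse of a series f with f_{000} <> 0:
   1/f = (1/f0) * sum_n g^n with g = 1 - f/f0 (g has zero constant term, so
   for the coefficient of x^i y^j z^k only n <= i+j+k contribute). *)
Definition finv (f : fps) : fps := fun i j k =>
  let g := fsub (fconst 1) (fscale (/ f 0%nat 0%nat 0%nat) f) in
  / f 0%nat 0%nat 0%nat * sumR (fun n => fpow g n i j k) (seq 0 (S (i + j + k))).
Definition fdiv (f g : fps) : fps := fmul f (finv g).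

Definition coef (f : fps) (i j k : nat) : R := f i j k.

Declare Scope fps_scope.
Delimit Scope fps_scope with FPS.
Notation "f + g" := (fadd f g) : fps_scope.
Notation "f - g" := (fsub f g) : fps_scope.
Notation "f * g" := (fmul f g) : fps_scope.
Notation "f / g" := (fdiv f g) : fps_scope.

Definition Agen : fps := fun lam k l => a lam k l.

Definition fone := fconst 1.
Definition ftwo := fconst 2.

Definition Aclosed : fps :=
  let yz1 := (fone + fY * fZ)%FPS in
  let u := (fone - ftwo * fX * fZ * yz1)%FPS in
  let v := (fone - ftwo * fX * fY * yz1)%FPS in
  (fone / ((ftwo - fY) * (ftwo - fZ))
   * ((fone + (fX * fZ * fZ) / u + (fX * fY * fY) / v)
      / (fone - fX * yz1 * yz1 - (fX * fY * fZ) / u - (fX * fY * fZ) / v)))%FPS.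

(* Main.v *)
Require Import Defs.
From Stdlib Require Import Reals List.
From Coquelicot Require Import Coquelicot.
From Stdlib Require Import Lra Lia ZArith Arith FunctionalExtensionality Setoid Morphisms.
Import ListNotations.
Open Scope R_scope.

Lemma sumR_nil f : sumR f [] = 0.
Proof. reflexivity. Qed.
Lemma sumR_cons f x l : sumR f (x :: l) = f x + sumR f l.
Proof. reflexivity. Qed.
Lemma sumR_app f l1 l2 : sumR f (l1 ++ l2) = sumR f l1 + sumR f l2.
Proof. induction l1; cbn [app]; [rewrite sumR_nil; ring|]. rewrite !sumR_cons, IHl1. ring. Qed.
Lemma sumR_ext_in f g l : (forall x, In x l -> f x = g x) -> sumR f l = sumR g l.
Proof. induction l; intros H; auto. rewrite !sumR_cons.
  rewrite H by (left; auto). rewrite IHl; auto. intros; apply H; right; auto. Qed.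
Lemma sumR_ext f g l : (forall x, f x = g x) -> sumR f l = sumR g l.
Proof. intros; apply sumR_ext_in; auto. Qed.
Lemma sumR_plus f g l : sumR (fun x => f x + g x) l = sumR f l + sumR g l.
Proof. induction l; [rewrite !sumR_nil; ring|]. rewrite !sumR_cons, IHl; ring. Qed.
Lemma sumR_minus f g l : sumR (fun x => f x - g x) l = sumR f l - sumR g l.
Proof. induction l; [rewrite !sumR_nil; ring|]. rewrite !sumR_cons, IHl; ring. Qed.
Lemma sumR_scal c f l : sumR (fun x => c * f x) l = c * sumR f l.
Proof. induction l; [rewrite !sumR_nil; ring|]. rewrite !sumR_cons, IHl; ring. Qed.
Lemma sumR_scal_r c f l : sumR (fun x => f x * c) l = sumR f l * c.
Proof. induction l; [rewrite !sumR_nil; ring|]. rewrite !sumR_cons, IHl; ring. Qed.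
Lemma sumR_0 l : sumR (fun _ => 0) l = 0.
Proof. induction l; auto. rewrite sumR_cons, IHl; ring. Qed.
Lemma sumR_zero f l : (forall x, In x l -> f x = 0) -> sumR f l = 0.
Proof. intros H. rewrite (sumR_ext_in f (fun _ => 0)); auto. apply sumR_0. Qed.
Lemma sumR_swap (f : nat -> nat -> R) l1 l2 :
  sumR (fun x => sumR (fun y => f x y) l2) l1 = sumR (fun y => sumR (fun x => f x y) l1) l2.
Proof. induction l1.
  - symmetry; apply sumR_zero; auto.
  - rewrite sumR_cons, IHl1, <- sumR_plus. apply sumR_ext; intros; rewrite sumR_cons; auto. Qed.
Lemma sumR_map f g l : sumR f (map g l) = sumR (fun x => f (g x)) l.
Proof. induction l; auto. simpl map. rewrite !sumR_cons, IHl; auto. Qed.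
Lemma sumR_seqS f a n : sumR f (seq a (S n)) = sumR f (seq a n) + f (a + n)%nat.
Proof. rewrite seq_S, sumR_app, sumR_cons, sumR_nil. ring. Qed.
Lemma sumR_seq_last f n : sumR f (seq 0 (S n)) = sumR f (seq 0 n) + f n.
Proof. rewrite sumR_seqS. reflexivity. Qed.
Lemma sumR_seq_first f a n : sumR f (seq a (S n)) = f a + sumR f (seq (S a) n).
Proof. reflexivity. Qed.
Lemma sumR_seq_shift f a n : sumR f (seq (S a) n) = sumR (fun x => f (S x)) (seq a n).
Proof. rewrite <- seq_shift, sumR_map. reflexivity. Qed.
Lemma sumR_mult_sums f g l1 l2 :
  sumR f l1 * sumR g l2 = sumR (fun x => sumR (fun y => f x * g y) l2) l1.
Proof. induction l1; [rewrite !sumR_nil; ring|]. rewrite !sumR_cons, <- IHl1, sumR_scal. ring. Qed.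


Definition bsum (b : nat -> nat) (l : list nat) : nat :=
  fold_right (fun i acc => (b i + acc)%nat) 0%nat l.

Lemma bsum_map b l : bsum b (map S l) = bsum (fun i => b (S i)) l.
Proof. induction l; simpl; auto. Qed.
Lemma bsum_app b l1 l2 : bsum b (l1 ++ l2) = (bsum b l1 + bsum b l2)%nat.
Proof. induction l1; simpl; auto. unfold bsum in *. simpl. rewrite IHl1. lia. Qed.
Lemma bsum_ext b1 b2 l : (forall i, b1 i = b2 i) -> bsum b1 l = bsum b2 l.
Proof. intros H; induction l; simpl; auto. Qed.

Definition sbits (n B : nat) : nat := bsum (fun i => Nat.b2n (Nat.testbit n i)) (seq 0 B).

Lemma s_sbits n : s n = sbits n (S n).
Proof. reflexivity. Qed.

Lemma sbits_S n B : sbits n (S B) = (Nat.b2n (Nat.odd n) + sbits (Nat.div2 n) B)%nat.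
Proof. unfold sbits. assert (E : seq 0 (S B) = 0%nat :: map S (seq 0 B)) by (simpl; rewrite seq_shift; auto).
  rewrite E. change (bsum ?b (0%nat :: ?l)) with (b 0%nat + bsum b l)%nat.
  cbv beta. rewrite Nat.bit0_odd. f_equal. rewrite bsum_map. apply bsum_ext. intros i. rewrite Nat.testbit_div2. auto. Qed.

Lemma testbit_big n i : (n <= i)%nat -> Nat.testbit n i = false.
Proof. intros H. destruct n. apply Nat.bits_0. apply Nat.bits_above_log2.
  pose proof (Nat.log2_lt_lin (S n)). lia. Qed.

Lemma sbits_stable n B k : (n <= B)%nat -> sbits n (B + k) = sbits n B.
Proof. intros H. induction k. rewrite Nat.add_0_r; auto.
  replace (B + S k)%nat with (S (B + k)) by lia. unfold sbits in *. rewrite seq_S, bsum_app, IHk.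
  simpl. rewrite testbit_big by lia. simpl. lia. Qed.

Lemma s_big n B : (n <= B)%nat -> s n = sbits n B.
Proof. intros H. rewrite s_sbits. replace B with (n + (B - n))%nat by lia.
  replace (S n) with (n + 1)%nat by lia. rewrite !sbits_stable; auto. Qed.

Lemma s_double m : s (2 * m) = s m.
Proof. rewrite (s_big (2*m) (S (2*m))) by lia. rewrite sbits_S.
  rewrite Nat.odd_mul. simpl Nat.odd. rewrite Nat.div2_double. simpl Nat.b2n.
  rewrite <- s_big by lia. auto. Qed.

Lemma s_double1 m : s (2 * m + 1) = S (s m).
Proof. rewrite (s_big (2*m+1) (S (2*m+1))) by lia. rewrite sbits_S.
  replace (2*m+1)%nat with (S (2*m)) by lia. rewrite Nat.odd_succ, Nat.even_mul. change (Nat.even 2) with true. cbn [orb Nat.b2n].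
  rewrite Nat.div2_succ_double. rewrite <- s_big by lia. auto. Qed.

Lemma s_0 : s 0 = 0%nat.
Proof. reflexivity. Qed.

Lemma s_ind (P : nat -> Prop) : P 0%nat -> (forall m, P m -> P (2*m)%nat) ->
  (forall m, P m -> P (2*m+1)%nat) -> forall n, P n.
Proof. intros H0 H1 H2 n. induction n as [n IH] using lt_wf_ind.
  destruct (Nat.Even_or_Odd n) as [[m Hm]|[m Hm]]; subst.
  - destruct m. simpl; auto. apply H1, IH. lia.
  - apply H2, IH. lia. Qed.

Lemma s_sub_aux n : forall a b, (a + b <= n)%nat -> (s (a + b) <= s a + s b)%nat.
Proof.
  induction n as [n IH] using lt_wf_ind. intros a b Hn.
  destruct (Nat.Even_or_Odd a) as [[x Hx]|[x Hx]]; destruct (Nat.Even_or_Odd b) as [[y Hy]|[y Hy]]; subst.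
  - destruct x. simpl. lia. replace (2 * S x + 2 * y)%nat with (2 * (S x + y))%nat by lia.
    rewrite !s_double. apply (IH (S x + y)%nat); lia.
  - replace (2 * x + (2 * y + 1))%nat with (2 * (x + y) + 1)%nat by lia.
    rewrite !s_double1, s_double. destruct x. simpl; lia. specialize (IH (S x + y)%nat ltac:(lia) (S x) y ltac:(lia)). lia.
  - replace (2 * x + 1 + 2 * y)%nat with (2 * (x + y) + 1)%nat by lia.
    rewrite !s_double1, s_double. specialize (IH (x + y)%nat ltac:(lia) x y ltac:(lia)). lia.
  - replace (2 * x + 1 + (2 * y + 1))%nat with (2 * (x + y + 1))%nat by lia.
    rewrite !s_double1, s_double.
    assert (H1 := IH (x + y)%nat ltac:(lia) x y ltac:(lia)).
    assert (H2 := IH (x + y + 1)%nat ltac:(lia) (x + y)%nat 1%nat ltac:(lia)).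
    replace (s 1) with 1%nat in H2 by reflexivity. lia. Qed.

Lemma s_sub a b : (s (a + b) <= s a + s b)%nat.
Proof. apply (s_sub_aux (a+b)); lia. Qed.

Lemma s_bound m n : (n < 2 ^ m)%nat -> (s n <= m)%nat.
Proof. revert n. induction m; intros n H.
  - simpl in H. assert (n = 0%nat) by lia. subst. rewrite s_0; lia.
  - destruct (Nat.Even_or_Odd n) as [[x Hx]|[x Hx]]; subst; rewrite Nat.pow_succ_r' in H.
    + rewrite s_double. assert (s x <= m)%nat by (apply IHm; lia). lia.
    + rewrite s_double1. assert (s x <= m)%nat by (apply IHm; lia). lia. Qed.

Lemma s_pow2 m : s (2 ^ m) = 1%nat.
Proof. induction m. reflexivity. rewrite Nat.pow_succ_r', s_double; auto. Qed.

Lemma s_bound2 m n : (1 <= m)%nat -> (n <= 2 ^ m)%nat -> (s n <= m)%nat.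
Proof. intros H1 H2. destruct (Nat.eq_dec n (2^m)). subst; rewrite s_pow2; lia.
  apply s_bound; lia. Qed.

Lemma rabs_aux (a b m : R) : 0 <= a <= m -> 0 < m -> (b = a \/ b = a + 1) -> b <= m + 1 ->
  Rabs (b / (m+1) - a / m) <= 1 / (m+1).
Proof. intros Ha Hm Hb Hbm.
  assert (E: b / (m+1) - a / m = (b*m - a*(m+1)) / (m*(m+1))) by (field; lra).
  rewrite E. unfold Rdiv. rewrite Rabs_mult, (Rabs_right (/ _)) by (apply Rle_ge, Rlt_le, Rinv_0_lt_compat; nra).
  rewrite Rinv_mult.
  apply Rle_trans with (m * (/m * / (m+1))).
  apply Rmult_le_compat_r. apply Rlt_le, Rmult_lt_0_compat; apply Rinv_0_lt_compat; lra.
  apply Rabs_le; destruct Hb; subst; nra.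
  right. field. lra. Qed.

Lemma cnt_S P N : cnt P (S N) = (cnt P N + if P N then 1 else 0)%nat.
Proof. unfold cnt. rewrite seq_S, filter_app, length_app. simpl. destruct (P N); simpl; lia. Qed.
Lemma cnt_0 P : cnt P 0 = 0%nat.
Proof. reflexivity. Qed.
Lemma cnt_le P N : (cnt P N <= N)%nat.
Proof. induction N. rewrite cnt_0; lia. rewrite cnt_S. destruct (P N); cbv iota; lia. Qed.
Lemma cnt_ext P Q N : (forall n, P n = Q n) -> cnt P N = cnt Q N.
Proof. intros H. induction N; auto. rewrite !cnt_S, IHN, H; auto. Qed.
Lemma cnt_double P M : cnt P (2 * M) = (cnt (fun m => P (2 * m)%nat) M + cnt (fun m => P (2 * m + 1)%nat) M)%nat.
Proof. induction M. reflexivity.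
  replace (2 * S M)%nat with (S (S (2 * M))) by lia. rewrite !cnt_S, IHM.
  replace (S (2 * M)) with (2 * M + 1)%nat by lia. destruct (P (2*M)%nat), (P (2*M+1)%nat); cbv iota; lia. Qed.
Lemma cnt_false P N : (forall n, P n = false) -> cnt P N = 0%nat.
Proof. intros H; induction N; auto. rewrite cnt_S, IHN, H; auto. Qed.
Lemma cnt_true P N : (forall n, P n = true) -> cnt P N = N.
Proof. intros H; induction N; auto. rewrite cnt_S, IHN, H; cbv iota; lia. Qed.

Definition ratio (P : nat -> bool) (N : nat) : R := INR (cnt P N) / INR N.
Definition HasD (P : nat -> bool) (L : R) : Prop := is_lim_seq (ratio P) L.

Lemma HasD_density P L : HasD P L -> density P = L.
Proof. intros H. unfold density. fold (ratio P). rewrite (is_lim_seq_unique _ _ H). reflexivity. Qed.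

Lemma half_lim P (L : R) : is_lim_seq (fun M => ratio P (2 * M)) L -> HasD P L.
Proof.
  intros H. apply is_lim_seq_spec in H. apply is_lim_seq_spec. unfold is_lim_seq' in *. intros eps.
  assert (He2 : 0 < eps / 2) by (destruct eps; simpl; lra).
  destruct (H (mkposreal _ He2)) as [M0 HM0]. simpl in HM0.
  destruct (archimed (2 / eps)) as [Har _].
  set (N1 := Z.to_nat (up (2 / eps))).
  assert (HN1 : 2 / eps < INR N1).
  { unfold N1. rewrite INR_IZR_INZ. rewrite Z2Nat.id. lra.
    assert (0 < 2 / eps) by (destruct eps; simpl; apply Rdiv_lt_0_compat; lra).
    apply le_IZR. lra. }
  exists (2 * M0 + N1 + 2)%nat. intros N HN.
  destruct (Nat.Even_or_Odd N) as [[M HM]|[M HM]]; subst N.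
  - apply Rlt_trans with (eps/2). apply HM0. lia. destruct eps; simpl; lra.
  - assert (HM1 : (M >= M0)%nat) by lia.
    specialize (HM0 M HM1).
    assert (Hpos : 0 < INR (2 * M)) by (apply lt_0_INR; lia).
    assert (Hb : Rabs (ratio P (2 * M + 1) - ratio P (2 * M)) <= 1 / (INR (2*M) + 1)).
    { unfold ratio. replace (INR (2 * M + 1)) with (INR (2*M) + 1) by (rewrite plus_INR; simpl; ring).
      apply rabs_aux; auto.
      - split. apply pos_INR. apply le_INR, cnt_le.
      - replace (2 * M + 1)%nat with (S (2 * M)) by lia. rewrite cnt_S.
        destruct (P (2*M)%nat); [right|left]; rewrite ?plus_INR; simpl; ring.
      - rewrite <- S_INR. apply le_INR. replace (S (2 * M)) with (2 * M + 1)%nat by lia. apply cnt_le. }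
    assert (Hx : INR N1 <= INR (2 * M) + 1).
    { rewrite <- S_INR. apply le_INR. lia. }
    assert (He : 0 < pos eps) by (destruct eps; auto).
    assert (Hsmall : 1 / (INR (2 * M) + 1) < eps / 2).
    { assert (2 < eps * (INR (2*M) + 1)).
      { apply Rmult_lt_reg_r with (/ eps). apply Rinv_0_lt_compat; auto.
        replace (eps * (INR (2 * M) + 1) * / eps) with (INR (2*M) + 1) by (field; lra). lra. }
      apply Rmult_lt_reg_r with (INR (2 * M) + 1). lra.
      replace (1 / (INR (2 * M) + 1) * (INR (2 * M) + 1)) with 1 by (field; lra). lra. }
    replace (M + (M + 0))%nat with (2 * M)%nat in HM0 by lia.
    replace (ratio P (2 * M + 1) - L) with ((ratio P (2 * M + 1) - ratio P (2 * M)) + (ratio P (2 * M) - L)) by ring.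
    eapply Rle_lt_trans. apply Rabs_triang. lra.
Qed.

Definition dd (n t : nat) : Z := (Z.of_nat (s (n + t)) - Z.of_nat (s n))%Z.
Definition Pk (k : Z) (t : nat) : nat -> bool := fun n => Z.eqb (dd n t) k.

Lemma delta_Pk k t : delta k t = density (Pk k t).
Proof. reflexivity. Qed.

Lemma dd_ee m t : dd (2 * m) (2 * t) = dd m t.
Proof. unfold dd. replace (2 * m + 2 * t)%nat with (2 * (m + t))%nat by lia. rewrite !s_double. auto. Qed.
Lemma dd_oe m t : dd (2 * m + 1) (2 * t) = dd m t.
Proof. unfold dd. replace (2 * m + 1 + 2 * t)%nat with (2 * (m + t) + 1)%nat by lia. rewrite !s_double1. lia. Qed.
Lemma dd_eo m t : dd (2 * m) (2 * t + 1) = (dd m t + 1)%Z.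
Proof. unfold dd. replace (2 * m + (2 * t + 1))%nat with (2 * (m + t) + 1)%nat by lia. rewrite s_double1, s_double. lia. Qed.
Lemma dd_oo m t : dd (2 * m + 1) (2 * t + 1) = (dd m (t + 1) - 1)%Z.
Proof. unfold dd. replace (2 * m + 1 + (2 * t + 1))%nat with (2 * (m + (t + 1)))%nat by lia. rewrite s_double1, s_double. lia. Qed.
Lemma dd_le n t : (dd n t <= Z.of_nat (s t))%Z.
Proof. unfold dd. pose proof (s_sub n t). lia. Qed.

Lemma ratio_eventually_ext (u v : nat -> R) (L : R) : (forall M, (1 <= M)%nat -> u M = v M) -> is_lim_seq u L -> is_lim_seq v L.
Proof. intros H. apply is_lim_seq_ext_loc. exists 1%nat. intros; apply H; lia. Qed.

Lemma HasD_even k t L : HasD (Pk k t) L -> HasD (Pk k (2 * t)) L.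
Proof. intros H. apply half_lim. revert H. apply ratio_eventually_ext. intros M HM.
  unfold ratio. rewrite cnt_double.
  rewrite (cnt_ext (fun m => Pk k (2 * t) (2 * m)) (Pk k t)) by (intros; unfold Pk; rewrite dd_ee; auto).
  rewrite (cnt_ext (fun m => Pk k (2 * t) (2 * m + 1)) (Pk k t)) by (intros; unfold Pk; rewrite dd_oe; auto).
  rewrite plus_INR, mult_INR. simpl INR. field. assert (0 < INR M) by (apply lt_0_INR; lia). lra. Qed.

Lemma HasD_odd k t L1 L2 : HasD (Pk (k - 1) t) L1 -> HasD (Pk (k + 1) (t + 1)) L2 ->
  HasD (Pk k (2 * t + 1)) ((L1 + L2) / 2).
Proof. intros H1 H2. apply half_lim.
  assert (H := is_lim_seq_plus' _ _ _ _ H1 H2).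
  assert (H' := is_lim_seq_scal_l _ (/2) _ H). simpl in H'.
  replace ((L1 + L2) / 2) with (/2 * (L1 + L2)) by field.
  revert H'. apply ratio_eventually_ext. intros M HM.
  unfold ratio. rewrite cnt_double.
  rewrite (cnt_ext (fun m => Pk k (2 * t + 1) (2 * m)) (Pk (k-1) t)).
  rewrite (cnt_ext (fun m => Pk k (2 * t + 1) (2 * m + 1)) (Pk (k+1) (t+1))).
  rewrite plus_INR, mult_INR. simpl INR. field. assert (0 < INR M) by (apply lt_0_INR; lia). lra.
  intros; unfold Pk; rewrite dd_oo. apply Bool.eq_true_iff_eq. rewrite !Z.eqb_eq. lia.
  intros; unfold Pk; rewrite dd_eo. apply Bool.eq_true_iff_eq. rewrite !Z.eqb_eq. lia. Qed.

Lemma HasD_zero P : (forall n, P n = false) -> HasD P 0.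
Proof. intros H. unfold HasD. apply (is_lim_seq_ext (fun _ => 0)). intros n. unfold ratio. rewrite cnt_false by auto. simpl. unfold Rdiv; ring.
  apply is_lim_seq_const. Qed.

Lemma HasD_vanish k t : (Z.of_nat (s t) < k)%Z -> HasD (Pk k t) 0.
Proof. intros H. apply HasD_zero. intros n. unfold Pk. apply Z.eqb_neq. pose proof (dd_le n t). lia. Qed.

Lemma HasD_t0 k : HasD (Pk k 0) (if Z.eqb k 0 then 1 else 0).
Proof. destruct (Z.eqb_spec k 0) as [Hk|Hk].
  - subst. unfold HasD. apply (ratio_eventually_ext (fun _ => 1)). intros M HM. unfold ratio.
    rewrite cnt_true. field. apply not_0_INR. lia. intros n; unfold Pk, dd. rewrite Nat.add_0_r. apply Z.eqb_eq; lia.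
    apply is_lim_seq_const.
  - apply HasD_zero. intros n; unfold Pk, dd. rewrite Nat.add_0_r. apply Z.eqb_neq; lia. Qed.

Lemma HasD_t1 j : HasD (Pk (1 - Z.of_nat j) 1) ((/2) ^ (S j)).
Proof. induction j.
  - replace ((/2)^1) with ((1 + 0)/2) by (simpl; field).
    change (Pk ?k 1) with (Pk k (2*0+1)). apply HasD_odd.
    + replace (1 - Z.of_nat 0 - 1)%Z with 0%Z by lia. apply HasD_t0.
    + apply HasD_vanish. simpl. reflexivity.
  - replace ((/2)^(S (S j))) with ((0 + (/2)^(S j))/2) by (simpl; field).
    change (Pk ?k 1) with (Pk k (2*0+1)). apply HasD_odd.
    + pose proof (HasD_t0 (1 - Z.of_nat (S j) - 1)). destruct (Z.eqb_spec (1 - Z.of_nat (S j) - 1) 0). lia. auto.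
    + replace (1 - Z.of_nat (S j) + 1)%Z with (1 - Z.of_nat j)%Z by lia. apply IHj. Qed.

Lemma HasD_ex t : forall k, exists L, HasD (Pk k t) L.
Proof.
  induction t as [t IH] using lt_wf_ind. intros k.
  destruct t as [|[|t']].
  - eexists; apply HasD_t0.
  - destruct (Z_lt_le_dec 1 k).
    + exists 0. apply HasD_vanish. simpl. lia.
    + exists ((/2)^(S (Z.to_nat (1 - k)))). replace k with (1 - Z.of_nat (Z.to_nat (1 - k)))%Z at 1 by lia. apply HasD_t1.
  - destruct (Nat.Even_or_Odd (S (S t'))) as [[m Hm]|[m Hm]]; rewrite Hm in *.
    + destruct (IH m ltac:(lia) k) as [L HL]. exists L. apply HasD_even; auto.
    + destruct (IH m ltac:(lia) (k - 1)%Z) as [L1 H1]. destruct (IH (m + 1)%nat ltac:(lia) (k + 1)%Z) as [L2 H2].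
      eexists. apply HasD_odd; eauto. Qed.

Lemma delta_HasD k t : HasD (Pk k t) (delta k t).
Proof. destruct (HasD_ex t k) as [L HL]. rewrite delta_Pk, (HasD_density _ _ HL). auto. Qed.

Lemma delta_even k t : delta k (2 * t) = delta k t.
Proof. apply HasD_density. apply HasD_even, delta_HasD. Qed.
Lemma delta_odd k t : delta k (2 * t + 1) = (delta (k - 1) t + delta (k + 1) (t + 1)) / 2.
Proof. apply HasD_density. apply HasD_odd; apply delta_HasD. Qed.
Lemma delta_vanish k t : (Z.of_nat (s t) < k)%Z -> delta k t = 0.
Proof. intros; apply HasD_density, HasD_vanish; auto. Qed.
Lemma delta_t1 j : delta (1 - Z.of_nat j) 1 = (/2) ^ (S j).
Proof. apply HasD_density, HasD_t1. Qed.
Lemma delta_pow2 k m : delta k (2 ^ m) = delta k 1.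
Proof. induction m. reflexivity. rewrite Nat.pow_succ_r', delta_even; auto. Qed.

Global Instance sumR_Proper : Proper (pointwise_relation nat eq ==> eq ==> eq) sumR.
Proof. intros f g H l1 l2 <-. apply sumR_ext. auto. Qed.

Definition SS (n : nat) (F : nat -> R) := sumR F (seq 0 (S n)).
Global Instance SS_Proper : Proper (eq ==> pointwise_relation nat eq ==> eq) SS.
Proof. intros n m <- f g H. unfold SS. apply sumR_ext. auto. Qed.

Lemma in_SS a n : In a (seq 0 (S n)) -> (a <= n)%nat.
Proof. intros H. apply in_seq in H. lia. Qed.

Lemma SS_ext_le n F G : (forall a, (a <= n)%nat -> F a = G a) -> SS n F = SS n G.
Proof. intros H. apply sumR_ext_in. intros a Ha. apply H, in_SS; auto. Qed.

Lemma SS_last n F : SS (S n) F = SS n F + F (S n).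
Proof. unfold SS. rewrite sumR_seq_last. auto. Qed.
Lemma SS_first n F : SS (S n) F = F 0%nat + SS n (fun a => F (S a)).
Proof. unfold SS. rewrite sumR_seq_first, sumR_seq_shift. auto. Qed.
Lemma SS_0 F : SS 0 F = F 0%nat.
Proof. unfold SS. cbn [seq]. rewrite sumR_cons, sumR_nil. ring. Qed.

Lemma SS_rev n F : SS n F = SS n (fun a => F (n - a)%nat).
Proof. revert F. induction n; intros F.
  - rewrite !SS_0. auto.
  - rewrite SS_first, SS_last. rewrite IHn. rewrite Nat.sub_diag. rewrite Rplus_comm. f_equal.
    apply SS_ext_le. intros a Ha. f_equal. lia. Qed.

Lemma SS_swap n m (F : nat -> nat -> R) : SS n (fun a => SS m (fun b => F a b)) = SS m (fun b => SS n (fun a => F a b)).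
Proof. unfold SS. apply sumR_swap. Qed.

Lemma SS_tri n (F : nat -> nat -> R) :
  SS n (fun a => SS a (fun b => F a b)) = SS n (fun b => SS (n - b) (fun c => F (b + c)%nat b)).
Proof. induction n.
  - rewrite !SS_0. simpl. auto.
  - rewrite SS_last, IHn. rewrite (SS_last n (fun b => SS (S n - b) _)).
    replace (S n - S n)%nat with 0%nat by lia. rewrite SS_0.
    rewrite (SS_ext_le n (fun b => SS (S n - b) (fun c => F (b + c)%nat b))
      (fun b => SS (n - b) (fun c => F (b + c)%nat b) + F (S n) b)).
    + unfold SS at 4. rewrite sumR_plus. fold (SS n (fun b => SS (n - b) (fun c => F (b + c)%nat b))).
      rewrite SS_last. replace (S n + 0)%nat with (S n) by lia. change (sumR (F (S n)) (seq 0 (S n))) with (SS n (fun b => F (S n) b)). ring.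
    + intros b Hb. replace (S n - b)%nat with (S (n - b)) by lia. rewrite SS_last. f_equal. f_equal. lia. Qed.

Lemma SS_scal_r n F c : SS n F * c = SS n (fun a => F a * c).
Proof. unfold SS. rewrite sumR_scal_r. auto. Qed.
Lemma SS_scal_l n F c : c * SS n F = SS n (fun a => c * F a).
Proof. unfold SS. rewrite sumR_scal. auto. Qed.
Lemma SS_plus n F G : SS n (fun a => F a + G a) = SS n F + SS n G.
Proof. unfold SS. apply sumR_plus. Qed.

Lemma fmul_SS f g i j k : fmul f g i j k = SS i (fun i1 => SS j (fun j1 => SS k (fun k1 =>
      f i1 j1 k1 * g (i - i1)%nat (j - j1)%nat (k - k1)%nat))).
Proof. reflexivity. Qed.

Lemma fmul_comm f g : fmul f g = fmul g f.
Proof. apply functional_extensionality; intros i; apply functional_extensionality; intros j;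
  apply functional_extensionality; intros k. rewrite !fmul_SS.
  rewrite SS_rev. apply SS_ext_le; intros a Ha.
  rewrite SS_rev. apply SS_ext_le; intros b Hb.
  rewrite SS_rev. apply SS_ext_le; intros c Hc.
  replace (i - (i - a))%nat with a by lia. replace (j - (j - b))%nat with b by lia.
  replace (k - (k - c))%nat with c by lia. ring. Qed.

Lemma fmul_assoc f g h : fmul (fmul f g) h = fmul f (fmul g h).
Proof. apply functional_extensionality; intros i; apply functional_extensionality; intros j;
  apply functional_extensionality; intros k. rewrite !fmul_SS.
  setoid_rewrite fmul_SS.
  repeat setoid_rewrite SS_scal_r. repeat setoid_rewrite SS_scal_l.
  transitivity (SS i (fun a1 => SS a1 (fun b1 => SS j (fun a2 => SS a2 (fun b2 => SS k (fun a3 => SS a3 (fun b3 =>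
     f b1 b2 b3 * g (a1 - b1)%nat (a2 - b2)%nat (a3 - b3)%nat * h (i - a1)%nat (j - a2)%nat (k - a3)%nat))))))).
  { apply SS_ext_le; intros a1 _.
    setoid_rewrite (SS_swap k a1). rewrite (SS_swap j a1). apply SS_ext_le; intros b1 _.
    apply SS_ext_le; intros a2 _. rewrite (SS_swap k a2). reflexivity. }
  rewrite SS_tri. setoid_rewrite (SS_tri j). setoid_rewrite (SS_tri k).
  apply SS_ext_le; intros b1 _.
  setoid_rewrite (SS_swap k (i - b1)). rewrite (SS_swap j (i - b1)).
  apply SS_ext_le; intros c1 _. apply SS_ext_le; intros b2 _.
  rewrite (SS_swap k (j - b2)). apply SS_ext_le; intros c2 _. apply SS_ext_le; intros b3 _.
  apply SS_ext_le; intros c3 _.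
  replace (b1 + c1 - b1)%nat with c1 by lia. replace (b2 + c2 - b2)%nat with c2 by lia.
  replace (b3 + c3 - b3)%nat with c3 by lia.
  replace (i - (b1 + c1))%nat with (i - b1 - c1)%nat by lia.
  replace (j - (b2 + c2))%nat with (j - b2 - c2)%nat by lia.
  replace (k - (b3 + c3))%nat with (k - b3 - c3)%nat by lia. ring.
Qed.

Lemma SS_zero n F : (forall a, (a <= n)%nat -> F a = 0) -> SS n F = 0.
Proof. intros H. unfold SS. apply sumR_zero. intros a Ha. apply H, in_SS; auto. Qed.

Lemma SS_point n p F : (forall a, a <> p -> F a = 0) -> SS n F = if Nat.leb p n then F p else 0.
Proof. intros H. induction n.
  - rewrite SS_0. destruct (Nat.leb_spec p 0).
    + assert (p = 0%nat) by lia. subst; auto.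
    + apply H; lia.
  - rewrite SS_last, IHn. destruct (Nat.leb_spec p n), (Nat.leb_spec p (S n)); try lia.
    + rewrite (H (S n)) by lia. ring.
    + assert (p = S n) by lia. subst. ring.
    + rewrite (H (S n)) by lia. ring. Qed.

Definition mono (c : R) (p q r : nat) : fps := fun i j k =>
  if (Nat.eqb i p && Nat.eqb j q && Nat.eqb k r)%bool then c else 0.

Lemma fmul_mono c p q r F i j k :
  fmul (mono c p q r) F i j k =
  if (Nat.leb p i && Nat.leb q j && Nat.leb r k)%bool then c * F (i - p)%nat (j - q)%nat (k - r)%nat else 0.
Proof. rewrite fmul_SS.
  rewrite (SS_point i p). 2:{ intros a Ha. apply SS_zero; intros b _. apply SS_zero; intros d _.
    unfold mono. apply Nat.eqb_neq in Ha. rewrite Ha. simpl. ring. }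
  destruct (Nat.leb p i) eqn:E1; simpl; auto.
  rewrite (SS_point j q). 2:{ intros b Hb. apply SS_zero; intros d _.
    unfold mono. apply Nat.eqb_neq in Hb. rewrite Hb, Nat.eqb_refl. simpl. ring. }
  destruct (Nat.leb q j) eqn:E2; simpl; auto.
  rewrite (SS_point k r). 2:{ intros d Hd.
    unfold mono. apply Nat.eqb_neq in Hd. rewrite Hd, !Nat.eqb_refl. simpl. ring. }
  destruct (Nat.leb r k) eqn:E3; simpl; auto.
  unfold mono. rewrite !Nat.eqb_refl. simpl. auto. Qed.

Lemma fX_mono : fX = mono 1 1 0 0.
Proof. repeat (apply functional_extensionality; intro). unfold fX, mono.
  destruct x as [|[|]], x0, x1; reflexivity. Qed.
Lemma fY_mono : fY = mono 1 0 1 0.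
Proof. repeat (apply functional_extensionality; intro). unfold fY, mono.
  destruct x, x0 as [|[|]], x1; reflexivity. Qed.
Lemma fZ_mono : fZ = mono 1 0 0 1.
Proof. repeat (apply functional_extensionality; intro). unfold fZ, mono.
  destruct x, x0, x1 as [|[|]]; reflexivity. Qed.
Lemma fconst_mono c : fconst c = mono c 0 0 0.
Proof. repeat (apply functional_extensionality; intro). unfold fconst, mono.
  destruct x, x0, x1; reflexivity. Qed.

Lemma fmul_X F i j k : fmul fX F i j k = match i with O => 0 | S i' => F i' j k end.
Proof. rewrite fX_mono, fmul_mono. destruct i; simpl. auto. rewrite Nat.sub_0_r, !Nat.sub_0_r. ring. Qed.
Lemma fmul_Y F i j k : fmul fY F i j k = match j with O => 0 | S j' => F i j' k end.
Proof. rewrite fY_mono, fmul_mono. destruct j; simpl. auto. rewrite !Nat.sub_0_r. ring. Qed.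
Lemma fmul_Z F i j k : fmul fZ F i j k = match k with O => 0 | S k' => F i j k' end.
Proof. rewrite fZ_mono, fmul_mono. destruct k; simpl. auto. rewrite !Nat.sub_0_r. ring. Qed.
Lemma fmul_const c F i j k : fmul (fconst c) F i j k = c * F i j k.
Proof. rewrite fconst_mono, fmul_mono. simpl. rewrite !Nat.sub_0_r. auto. Qed.

Lemma fmul_000 f g : fmul f g 0%nat 0%nat 0%nat = f 0%nat 0%nat 0%nat * g 0%nat 0%nat 0%nat.
Proof. rewrite fmul_SS, !SS_0. reflexivity. Qed.

Definition fzero : fps := fconst 0.
Definition fopp (f : fps) : fps := fun i j k => - f i j k.

Ltac fext := repeat (apply functional_extensionality; intro).

Lemma fmul_distr_l f g h : fmul (fadd f g) h = fadd (fmul f h) (fmul g h).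
Proof. fext. unfold fadd at 2. rewrite !fmul_SS. rewrite <- SS_plus. apply SS_ext_le; intros.
  rewrite <- SS_plus. apply SS_ext_le; intros. rewrite <- SS_plus. apply SS_ext_le; intros.
  unfold fadd. ring. Qed.

Lemma fmul_one_l f : fmul fone f = f.
Proof. fext. unfold fone. rewrite fmul_const. ring. Qed.

Lemma fps_ring_theory : ring_theory fzero fone fadd fmul fsub fopp (@eq fps).
Proof. split.
  - intros; fext; unfold fadd, fzero, fconst. destruct x0, x1, x2; ring.
  - intros; fext; unfold fadd; ring.
  - intros; fext; unfold fadd; ring.
  - apply fmul_one_l.
  - apply fmul_comm.
  - intros; symmetry; apply fmul_assoc.
  - apply fmul_distr_l.
  - intros; fext; unfold fsub, fadd, fopp; ring.
  - intros; fext; unfold fadd, fopp, fzero, fconst. destruct x0, x1, x2; ring. Qed.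

Add Ring fpsRing : fps_ring_theory.

Lemma fconst_add a b : fconst (a + b) = fadd (fconst a) (fconst b).
Proof. fext. unfold fadd, fconst. destruct x, x0, x1; ring. Qed.
Lemma fconst_mul a b : fconst (a * b) = fmul (fconst a) (fconst b).
Proof. fext. rewrite fmul_const. unfold fconst. destruct x, x0, x1; ring. Qed.
Lemma ftwo_eq : ftwo = fadd fone fone.
Proof. unfold ftwo, fone. rewrite <- fconst_add. f_equal. Qed.
Lemma fscale_eq r f : fscale r f = fmul (fconst r) f.
Proof. fext. rewrite fmul_const. reflexivity. Qed.

Lemma fmul_lower f F G i j k :
  (forall a b c, (a <= i)%nat -> (b <= j)%nat -> (c <= k)%nat -> F a b c = G a b c) ->
  fmul f F i j k = fmul f G i j k.
Proof. intros H. rewrite !fmul_SS. apply SS_ext_le; intros a Ha. apply SS_ext_le; intros b Hb.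
  apply SS_ext_le; intros c Hc. rewrite H by lia. auto. Qed.

Lemma fpow_vanish g : g 0%nat 0%nat 0%nat = 0 ->
  forall n i j k, (i + j + k < n)%nat -> fpow g n i j k = 0.
Proof. intros H0 n. induction n; intros i j k Hn. lia.
  simpl fpow. rewrite fmul_SS. apply SS_zero; intros a Ha. apply SS_zero; intros b Hb. apply SS_zero; intros c Hc.
  destruct (Nat.eq_dec (a + b + c) 0).
  - assert (a = 0%nat /\ b = 0%nat /\ c = 0%nat) as [-> [-> ->]] by lia. rewrite H0. ring.
  - rewrite IHn by lia. ring. Qed.

Definition fsumpow (g : fps) (N : nat) : fps := fun i j k => sumR (fun n => fpow g n i j k) (seq 0 (S N)).

Lemma fsumpow_S g N : fsumpow g (S N) = fadd (fsumpow g N) (fpow g (S N)).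
Proof. fext. unfold fsumpow, fadd. rewrite sumR_seq_last. auto. Qed.
Lemma fsumpow_0 g : fsumpow g 0 = fone.
Proof. fext. unfold fsumpow. cbn [seq]. rewrite sumR_cons, sumR_nil. simpl. unfold fone. ring. Qed.

Lemma fsumpow_tele g N : fmul (fsub fone g) (fsumpow g N) = fsub fone (fpow g (S N)).
Proof. induction N.
  - rewrite fsumpow_0. simpl fpow. change (fconst 1) with fone. ring.
  - rewrite fsumpow_S. change (fpow g (S (S N))) with (fmul g (fpow g (S N))).
    transitivity (fadd (fmul (fsub fone g) (fsumpow g N)) (fmul (fsub fone g) (fpow g (S N)))). ring.
    rewrite IHN. ring. Qed.

Lemma fsumpow_stable g : g 0%nat 0%nat 0%nat = 0 -> forall M i j k, (i + j + k <= M)%nat ->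
  fsumpow g M i j k = fsumpow g (i + j + k) i j k.
Proof. intros H0 M i j k HM. induction M.
  - assert (i + j + k = 0)%nat as -> by lia. auto.
  - destruct (Nat.eq_dec (i + j + k) (S M)) as [E|E]. rewrite E; auto.
    rewrite fsumpow_S. unfold fadd. rewrite IHM by lia. rewrite fpow_vanish by (auto; lia). ring. Qed.

Lemma finv_spec f : f 0%nat 0%nat 0%nat <> 0 -> fmul f (finv f) = fone.
Proof. intros Hc. set (c := f 0%nat 0%nat 0%nat) in *.
  set (g := fsub (fconst 1) (fscale (/ c) f)).
  assert (Hg0 : g 0%nat 0%nat 0%nat = 0).
  { unfold g, fsub, fscale, fconst. fold c. field. auto. }
  assert (Hf : f = fmul (fconst c) (fsub fone g)).
  { fext. rewrite fmul_const. unfold g, fsub, fscale, fone, fconst. field. auto. }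
  fext. rename x into i, x0 into j, x1 into k.
  assert (Hinv : fmul f (finv f) i j k = fmul f (fmul (fconst (/ c)) (fsumpow g (i + j + k))) i j k).
  { apply fmul_lower. intros a b d Ha Hb Hd. rewrite fmul_const. unfold finv. fold c. fold g.
    f_equal. change (sumR (fun n => fpow g n a b d) (seq 0 (S (a + b + d)))) with (fsumpow g (a + b + d) a b d).
    symmetry. apply fsumpow_stable; auto. lia. }
  rewrite Hinv. rewrite Hf at 1.
  replace (fmul (fmul (fconst c) (fsub fone g)) (fmul (fconst (/ c)) (fsumpow g (i + j + k))))
    with (fmul (fconst (c * / c)) (fmul (fsub fone g) (fsumpow g (i + j + k)))).
  2:{ rewrite fconst_mul. ring. }
  rewrite Rinv_r by auto. fold fone. rewrite fmul_one_l, fsumpow_tele.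
  unfold fsub. rewrite fpow_vanish by (auto; lia). ring. Qed.

Lemma finv_unique f h : f 0%nat 0%nat 0%nat <> 0 -> fmul f h = fone -> h = finv f.
Proof. intros Hc H. transitivity (fmul h (fmul f (finv f))).
  rewrite finv_spec by auto. ring. transitivity (fmul (fmul f h) (finv f)). ring. rewrite H. ring. Qed.

Definition Gc (lam t k : nat) : R := 2 ^ lam * delta (Z.of_nat (lam + 1) - Z.of_nat k) t.
Definition Hc (lam t k : nat) : R := 2 ^ lam * delta (Z.of_nat (lam + 1) - Z.of_nat k) (t + 1).
Definition sh (F : nat -> R) (k : nat) : R := match k with O => 0 | S k' => F k' end.

Lemma in_block lam t : In t (block lam) -> (2 ^ lam <= t < 2 ^ (S lam))%nat.
Proof. unfold block. rewrite in_seq. rewrite Nat.pow_succ_r'. lia. Qed.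

Lemma s_t_bound lam t : (t < 2 ^ (S lam))%nat -> (s t <= lam + 1)%nat.
Proof. intros H. pose proof (s_bound (S lam) t H). lia. Qed.
Lemma s_t1_bound lam t : (t < 2 ^ (S lam))%nat -> (s (t + 1) <= lam + 1)%nat.
Proof. intros H. pose proof (s_bound2 (S lam) (t + 1) ltac:(lia) ltac:(lia)). lia. Qed.

Lemma C1 lam t k : (t < 2 ^ (S lam))%nat -> Gc (S lam) (2 * t) k = 2 * sh (Gc lam t) k.
Proof. intros Ht. unfold Gc, sh. rewrite delta_even. destruct k as [|k].
  - rewrite delta_vanish. ring. pose proof (s_t_bound lam t Ht). lia.
  - replace (Z.of_nat (S lam + 1) - Z.of_nat (S k))%Z with (Z.of_nat (lam + 1) - Z.of_nat k)%Z by lia.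
    simpl pow. ring. Qed.

Lemma C2 lam t k : (t < 2 ^ (S lam))%nat -> Gc (S lam) (2 * t + 1) k = Gc lam t k + sh (sh (Hc lam t)) k.
Proof. intros Ht. unfold Gc, Hc, sh. rewrite delta_odd.
  replace (Z.of_nat (S lam + 1) - Z.of_nat k - 1)%Z with (Z.of_nat (lam + 1) - Z.of_nat k)%Z by lia.
  pose proof (s_t1_bound lam t Ht).
  destruct k as [|[|k]].
  - rewrite (delta_vanish _ (t + 1)) by lia. simpl pow. field.
  - rewrite (delta_vanish _ (t + 1)) by lia. simpl pow. field.
  - replace (Z.of_nat (S lam + 1) - Z.of_nat (S (S k)) + 1)%Z with (Z.of_nat (lam + 1) - Z.of_nat k)%Z by lia.
    simpl pow. field. Qed.

Lemma C3 lam t k : Hc (S lam) (2 * t) k = Gc (S lam) (2 * t + 1) k.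
Proof. reflexivity. Qed.

Lemma C4 lam t k : (t < 2 ^ (S lam))%nat -> Hc (S lam) (2 * t + 1) k = 2 * sh (Hc lam t) k.
Proof. intros Ht. unfold Hc, sh. replace (2 * t + 1 + 1)%nat with (2 * (t + 1))%nat by lia. rewrite delta_even.
  destruct k as [|k].
  - rewrite delta_vanish. ring. pose proof (s_t1_bound lam t Ht). lia.
  - replace (Z.of_nat (S lam + 1) - Z.of_nat (S k))%Z with (Z.of_nat (lam + 1) - Z.of_nat k)%Z by lia.
    simpl pow. ring. Qed.

Lemma sumR_double f a b : sumR f (seq (2 * a) (2 * b)) = sumR (fun t => f (2 * t)%nat + f (2 * t + 1)%nat) (seq a b).
Proof. induction b.
  - reflexivity.
  - replace (2 * S b)%nat with (S (S (2 * b))) by lia. rewrite !sumR_seqS, IHb.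
    replace (2 * a + S (2 * b))%nat with (2 * (a + b) + 1)%nat by lia.
    replace (2 * a + 2 * b)%nat with (2 * (a + b))%nat by lia. ring. Qed.

Lemma sumR_block_S f lam : sumR f (block (S lam)) = sumR (fun t => f (2 * t)%nat + f (2 * t + 1)%nat) (block lam).
Proof. unfold block. rewrite Nat.pow_succ_r'. apply sumR_double. Qed.

Definition Sgg lam k l := sumR (fun t => Gc lam t k * Gc lam t l) (block lam).
Definition Sgh lam k l := sumR (fun t => Gc lam t k * Hc lam t l) (block lam).
Definition Shg lam k l := sumR (fun t => Hc lam t k * Gc lam t l) (block lam).
Definition Shh lam k l := sumR (fun t => Hc lam t k * Hc lam t l) (block lam).

Lemma Agen_Sgg lam k l : Agen lam k l = Sgg lam k l.
Proof. unfold Agen, a, Sgg, Gc. rewrite <- sumR_scal. apply sumR_ext. intros t.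
  replace (4 ^ lam) with (2 ^ lam * 2 ^ lam) by (rewrite <- Rpow_mult_distr; f_equal; ring). ring. Qed.

Lemma sumR_shift1 f a n : sumR (fun t => f (t + 1)%nat) (seq a n) = sumR f (seq a n) - f a + f (a + n)%nat.
Proof. revert a. induction n; intros a.
  - cbn [seq]. rewrite Nat.add_0_r, !sumR_nil. ring.
  - rewrite sumR_seq_first, IHn. rewrite sumR_seq_first. replace (S a + n)%nat with (a + S n)%nat by lia.
    replace (a + 1)%nat with (S a) by lia. ring. Qed.

Lemma Shh_Sgg lam k l : Shh lam k l = Sgg lam k l.
Proof. unfold Shh, Sgg, Hc, block.
  rewrite (sumR_shift1 (fun t => 2 ^ lam * delta (Z.of_nat (lam + 1) - Z.of_nat k) t *
     (2 ^ lam * delta (Z.of_nat (lam + 1) - Z.of_nat l) t))).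
  replace (2 ^ lam + 2 ^ lam)%nat with (2 ^ (S lam))%nat by (rewrite Nat.pow_succ_r'; lia).
  rewrite !delta_pow2. unfold Gc. ring. Qed.

Definition dk (F : fps) : fps := fun i k l => match k with O => 0 | S k' => F i k' l end.
Definition dl (F : fps) : fps := fun i k l => match l with O => 0 | S l' => F i k l' end.

Lemma fY_dk F : fmul fY F = dk F.
Proof. fext. rewrite fmul_Y. reflexivity. Qed.
Lemma fZ_dl F : fmul fZ F = dl F.
Proof. fext. rewrite fmul_Z. reflexivity. Qed.

Lemma push_k (F1 : nat -> nat -> R) (Q : nat -> R) L k :
  sumR (fun t => sh (F1 t) k * Q t) L = match k with O => 0 | S k' => sumR (fun t => F1 t k' * Q t) L end.
Proof. destruct k; cbn [sh]; auto. apply sumR_zero; intros; ring. Qed.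
Lemma push_l (P : nat -> R) (F2 : nat -> nat -> R) L l :
  sumR (fun t => P t * sh (F2 t) l) L = match l with O => 0 | S l' => sumR (fun t => P t * F2 t l') L end.
Proof. destruct l; cbn [sh]; auto. apply sumR_zero; intros; ring. Qed.

Definition SggF : fps := Sgg.
Definition SghF : fps := Sgh.
Definition ShgF : fps := Shg.

Lemma Sgg_S lam k l :
  Sgg (S lam) k l = Sgg lam k l + 4 * dk (dl Sgg) lam k l + dl (dl Sgh) lam k l + dk (dk Shg) lam k l
     + dk (dk (dl (dl Shh))) lam k l.
Proof.
  unfold Sgg at 1. rewrite sumR_block_S.
  rewrite (sumR_ext_in _ (fun t => 4 * (sh (Gc lam t) k * sh (Gc lam t) l) + Gc lam t k * Gc lam t l
      + Gc lam t k * sh (sh (Hc lam t)) l + sh (sh (Hc lam t)) k * Gc lam t l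
      + sh (sh (Hc lam t)) k * sh (sh (Hc lam t)) l)).
  2:{ intros t Ht. apply in_block in Ht. rewrite !C1, !C2 by lia. ring. }
  rewrite !sumR_plus, sumR_scal.
  destruct k as [|[|k]], l as [|[|l]]; cbn [dk dl sh];
  repeat setoid_rewrite Rmult_0_l; repeat setoid_rewrite Rmult_0_r; rewrite ?sumR_0; unfold Sgg, Sgh, Shg, Shh; ring.
Qed.

Lemma Sgh_S lam k l :
  Sgh (S lam) k l = 2 * dk Sgg lam k l + 2 * dk (dl (dl Sgh)) lam k l + 2 * dl Sgh lam k l
     + 2 * dk (dk (dl Shh)) lam k l.
Proof.
  unfold Sgh at 1. rewrite sumR_block_S.
  rewrite (sumR_ext_in _ (fun t => 2 * (sh (Gc lam t) k * Gc lam t l) + 2 * (sh (Gc lam t) k * sh (sh (Hc lam t)) l)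
      + 2 * (Gc lam t k * sh (Hc lam t) l) + 2 * (sh (sh (Hc lam t)) k * sh (Hc lam t) l))).
  2:{ intros t Ht. apply in_block in Ht. rewrite !C3, !C1, !C4, !C2 by lia. ring. }
  rewrite !sumR_plus, !sumR_scal.
  destruct k as [|[|k]], l as [|[|l]]; cbn [dk dl sh];
  repeat setoid_rewrite Rmult_0_l; repeat setoid_rewrite Rmult_0_r; rewrite ?sumR_0; unfold Sgg, Sgh, Shg, Shh; ring.
Qed.

Lemma Shg_S lam k l :
  Shg (S lam) k l = 2 * dl Sgg lam k l + 2 * dk (dk (dl Shg)) lam k l + 2 * dk Shg lam k l
     + 2 * dk (dl (dl Shh)) lam k l.
Proof.
  unfold Shg at 1. rewrite sumR_block_S.
  rewrite (sumR_ext_in _ (fun t => 2 * (Gc lam t k * sh (Gc lam t) l) + 2 * (sh (sh (Hc lam t)) k * sh (Gc lam t) l)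
      + 2 * (sh (Hc lam t) k * Gc lam t l) + 2 * (sh (Hc lam t) k * sh (sh (Hc lam t)) l))).
  2:{ intros t Ht. apply in_block in Ht. rewrite !C3, !C1, !C4, !C2 by lia. ring. }
  rewrite !sumR_plus, !sumR_scal.
  destruct k as [|[|k]], l as [|[|l]]; cbn [dk dl sh];
  repeat setoid_rewrite Rmult_0_l; repeat setoid_rewrite Rmult_0_r; rewrite ?sumR_0; unfold Sgg, Sgh, Shg, Shh; ring.
Qed.

Definition Bser : fps := fun i k l => match i with O => (/2) ^ (S k) * (/2) ^ (S l) | S _ => 0 end.

Lemma Sgg_0 k l : Sgg 0 k l = (/2) ^ (S k) * (/2) ^ (S l).
Proof. unfold Sgg, block. simpl seq. rewrite sumR_cons, sumR_nil. unfold Gc.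
  replace (Z.of_nat (0 + 1) - Z.of_nat k)%Z with (1 - Z.of_nat k)%Z by lia.
  replace (Z.of_nat (0 + 1) - Z.of_nat l)%Z with (1 - Z.of_nat l)%Z by lia. rewrite !delta_t1. simpl. ring. Qed.
Lemma Sgh_0 k l : Sgh 0 k l = (/2) ^ (S k) * (/2) ^ (S l).
Proof. rewrite <- Sgg_0. unfold Sgh, Sgg, block. simpl seq. rewrite !sumR_cons, !sumR_nil. unfold Gc, Hc.
  change (1 + 1)%nat with (2 ^ 1)%nat. rewrite delta_pow2. auto. Qed.
Lemma Shg_0 k l : Shg 0 k l = (/2) ^ (S k) * (/2) ^ (S l).
Proof. rewrite <- Sgg_0. unfold Shg, Sgg, block. simpl seq. rewrite !sumR_cons, !sumR_nil. unfold Gc, Hc.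
  change (1 + 1)%nat with (2 ^ 1)%nat. rewrite delta_pow2. auto. Qed.

Lemma lin_comb P Q (L1 R1 L2 R2 L3 R3 L4 R4 L5 R5 K1 K2 K3 K4 K5 : fps) :
  L1 = R1 -> L2 = R2 -> L3 = R3 -> L4 = R4 -> L5 = R5 ->
  fsub P Q = fadd (fadd (fadd (fadd (fmul K1 (fsub L1 R1)) (fmul K2 (fsub L2 R2))) (fmul K3 (fsub L3 R3)))
     (fmul K4 (fsub L4 R4))) (fmul K5 (fsub L5 R5)) -> P = Q.
Proof. intros -> -> -> -> -> H. transitivity (fadd (fsub P Q) Q). ring. rewrite H. clear H. ring. Qed.

Lemma Shh_eq : Shh = Sgg.
Proof. fext. apply Shh_Sgg. Qed.

Notation A_ := (Sgg : fps).
Notation U_ := (Sgh : fps).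
Notation V_ := (Shg : fps).

Lemma E1 : A_ = fadd Bser (fmul fX (fadd (fadd (fadd (fadd A_ (fmul (fconst 4) (fmul fY (fmul fZ A_))))
   (fmul fZ (fmul fZ U_))) (fmul fY (fmul fY V_))) (fmul fY (fmul fY (fmul fZ (fmul fZ A_)))))).
Proof. rewrite !fY_dk, !fZ_dl. fext. rename x into i, x0 into k, x1 into l.
  unfold fadd at 1. rewrite fmul_X. destruct i.
  - rewrite Sgg_0. simpl. ring.
  - unfold fadd. rewrite fmul_const. rewrite Sgg_S, Shh_eq. unfold Bser. ring. Qed.

Lemma E2 : U_ = fadd Bser (fmul fX (fadd (fadd (fadd (fmul (fconst 2) (fmul fY A_))
   (fmul (fconst 2) (fmul fY (fmul fZ (fmul fZ U_))))) (fmul (fconst 2) (fmul fZ U_)))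
   (fmul (fconst 2) (fmul fY (fmul fY (fmul fZ A_)))))).
Proof. rewrite !fY_dk, !fZ_dl. fext. rename x into i, x0 into k, x1 into l.
  unfold fadd at 1. rewrite fmul_X. destruct i.
  - rewrite Sgh_0. simpl. ring.
  - unfold fadd. rewrite !fmul_const. rewrite Sgh_S, Shh_eq. unfold Bser. ring. Qed.

Lemma E3 : V_ = fadd Bser (fmul fX (fadd (fadd (fadd (fmul (fconst 2) (fmul fZ A_))
   (fmul (fconst 2) (fmul fY (fmul fY (fmul fZ V_))))) (fmul (fconst 2) (fmul fY V_)))
   (fmul (fconst 2) (fmul fY (fmul fZ (fmul fZ A_)))))).
Proof. rewrite !fY_dk, !fZ_dl. fext. rename x into i, x0 into k, x1 into l.
  unfold fadd at 1. rewrite fmul_X. destruct i.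
  - rewrite Shg_0. simpl. ring.
  - unfold fadd. rewrite !fmul_const. rewrite Shg_S, Shh_eq. unfold Bser. ring. Qed.

Lemma W_B : fmul (fmul (fsub ftwo fY) (fsub ftwo fZ)) Bser = fone.
Proof.
  transitivity (fadd (fsub (fsub (fmul (fconst 4) Bser) (fmul (fconst 2) (fmul fY Bser))) (fmul (fconst 2) (fmul fZ Bser)))
     (fmul fY (fmul fZ Bser))).
  { replace (fconst 4) with (fmul ftwo ftwo) by (unfold ftwo; rewrite <- fconst_mul; f_equal; ring).
    unfold ftwo. ring. }
  rewrite !fY_dk, !fZ_dl. fext. rename x into i, x0 into k, x1 into l. unfold fsub, fadd. rewrite !fmul_const.
  unfold fone, fconst, dk, dl, Bser. destruct i; cbn iota; [|destruct k, l; ring].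
  destruct k, l; simpl; field. Qed.

Definition const000 (f : fps) := f 0%nat 0%nat 0%nat.

Lemma finv_W : finv (fmul (fsub ftwo fY) (fsub ftwo fZ)) = Bser.
Proof. symmetry. apply finv_unique. 2: apply W_B.
  rewrite fmul_000. unfold fsub, ftwo, fconst, fY, fZ. lra. Qed.

Lemma lin2 P Q (L1 R1 L2 R2 K1 K2 : fps) :
  L1 = R1 -> L2 = R2 -> fsub P Q = fadd (fmul K1 (fsub L1 R1)) (fmul K2 (fsub L2 R2)) -> P = Q.
Proof. intros -> -> H. transitivity (fadd (fsub P Q) Q). ring. rewrite H. clear H. ring. Qed.

Lemma c000_nz_1 f : f 0%nat 0%nat 0%nat = 1 -> f 0%nat 0%nat 0%nat <> 0.
Proof. intros ->. lra. Qed.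

Lemma alg (A U V B X Y Z iW iu iv iD : fps) :
  let c2 := fadd fone fone in
  let yz1 := fadd fone (fmul Y Z) in
  let u := fsub fone (fmul (fmul (fmul c2 X) Z) yz1) in
  let v := fsub fone (fmul (fmul (fmul c2 X) Y) yz1) in
  let D := fsub (fsub (fsub fone (fmul (fmul X yz1) yz1)) (fmul (fmul (fmul X Y) Z) iu)) (fmul (fmul (fmul X Y) Z) iv) in
  let N := fadd (fadd fone (fmul (fmul (fmul X Z) Z) iu)) (fmul (fmul (fmul X Y) Y) iv) in
  iW = B -> fmul u iu = fone -> fmul v iv = fone -> fmul D iD = fone ->
  A = fadd B (fmul X (fadd (fadd (fadd (fadd A (fmul (fmul c2 c2) (fmul Y (fmul Z A))))
   (fmul Z (fmul Z U))) (fmul Y (fmul Y V))) (fmul Y (fmul Y (fmul Z (fmul Z A)))))) ->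
  U = fadd B (fmul X (fadd (fadd (fadd (fmul c2 (fmul Y A))
   (fmul c2 (fmul Y (fmul Z (fmul Z U))))) (fmul c2 (fmul Z U)))
   (fmul c2 (fmul Y (fmul Y (fmul Z A)))))) ->
  V = fadd B (fmul X (fadd (fadd (fadd (fmul c2 (fmul Z A))
   (fmul c2 (fmul Y (fmul Y (fmul Z V))))) (fmul c2 (fmul Y V)))
   (fmul c2 (fmul Y (fmul Z (fmul Z A)))))) ->
  A = fmul (fmul fone iW) (fmul N iD).
Proof.
  intros c2 yz1 u v D N HiW Hu Hv HD H1 H2 H3.
  assert (HU : U = fmul iu (fadd B (fmul (fmul (fmul c2 X) Y) (fmul yz1 A)))).
  { apply (lin2 _ _ _ _ _ _ iu (fopp U) H2 Hu). unfold u, yz1, c2. clear. ring. }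
  assert (HV : V = fmul iv (fadd B (fmul (fmul (fmul c2 X) Z) (fmul yz1 A)))).
  { apply (lin2 _ _ _ _ _ _ iv (fopp V) H3 Hv). unfold v, yz1, c2. clear. ring. }
  assert (HDA : fmul D A = fmul B N).
  { apply (lin_comb _ _ _ _ _ _ _ _ _ _ _ _ fone (fmul (fmul X Z) Z) (fmul (fmul X Y) Y)
       (fopp (fmul (fmul (fmul X Y) Z) A)) (fopp (fmul (fmul (fmul X Y) Z) A)) H1 HU HV Hu Hv).
    unfold D, N, u, v, yz1, c2. clear. ring. }
  assert (HA : A = fmul (fmul B N) iD).
  { apply (lin2 _ _ _ _ _ _ (fopp A) iD HD HDA). clear. ring. }
  rewrite HiW, HA. ring.
Qed.

Lemma Agen_eq : Agen = Sgg.
Proof. fext. apply Agen_Sgg. Qed.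

Theorem Agen_closed : Agen = Aclosed.
Proof.
  rewrite Agen_eq. unfold Aclosed, fdiv. rewrite ftwo_eq.
  assert (H2 : fconst 2 = fadd fone fone) by apply ftwo_eq.
  apply alg with (U := Sgh) (V := Shg) (B := Bser).
  - rewrite <- ftwo_eq. apply finv_W.
  - apply finv_spec. unfold fsub. rewrite !fmul_000. cbv [fone fconst fX fZ fY fadd ftwo]. rewrite fmul_000. cbv [fone fconst fX fZ fY fadd ftwo]. lra.
  - apply finv_spec. unfold fsub. rewrite !fmul_000. cbv [fone fconst fX fZ fY fadd ftwo]. rewrite fmul_000. cbv [fone fconst fX fZ fY fadd ftwo]. lra.
  - apply finv_spec. unfold fsub. rewrite !fmul_000. cbv [fone fconst fX fZ fY fadd ftwo]. rewrite ?fmul_000. cbv [fone fconst fX fZ fY fadd ftwo]. lra.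
  - rewrite <- H2, <- fconst_mul. replace (2 * 2) with 4 by ring. apply E1.
  - rewrite <- H2. apply E2.
  - rewrite <- H2. apply E3.
Qed.

Theorem part1 : forall lam k l, coef Agen lam k l = coef Aclosed lam k l.
Proof. intros. rewrite Agen_closed. reflexivity. Qed.

Definition ind (b : bool) : R := if b then 1 else 0.

Lemma cnt_sum P (Q : nat -> nat -> bool) L N :
  (forall n, ind (P n) = sumR (fun k => ind (Q k n)) L) ->
  INR (cnt P N) = sumR (fun k => INR (cnt (Q k) N)) L.
Proof. intros H. induction N.
  - rewrite cnt_0. simpl. symmetry. apply sumR_zero. intros; reflexivity.
  - rewrite cnt_S, plus_INR, IHN.
    rewrite (sumR_ext (fun k => INR (cnt (Q k) (S N))) (fun k => INR (cnt (Q k) N) + ind (Q k N))).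
    2:{ intros k. rewrite cnt_S, plus_INR. unfold ind. destruct (Q k N); auto. }
    rewrite sumR_plus, <- H. unfold ind. destruct (P N); auto. Qed.

Lemma lim_sumR (u : nat -> nat -> R) (lv : nat -> R) L :
  (forall k, In k L -> is_lim_seq (u k) (lv k)) ->
  is_lim_seq (fun N => sumR (fun k => u k N) L) (sumR lv L).
Proof. induction L; intros H.
  - rewrite sumR_nil. apply (is_lim_seq_ext (fun _ => 0)). intros; rewrite sumR_nil; auto. apply is_lim_seq_const.
  - rewrite sumR_cons. apply (is_lim_seq_ext (fun N => u a N + sumR (fun k => u k N) L)).
    intros; rewrite sumR_cons; auto.
    apply is_lim_seq_plus'. apply H; left; auto. apply IHL. intros; apply H; right; auto. Qed.

Lemma density_sum P (Q : nat -> nat -> bool) L :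
  (forall n, ind (P n) = sumR (fun k => ind (Q k n)) L) ->
  (forall k, In k L -> exists x, HasD (Q k) x) ->
  density P = sumR (fun k => density (Q k)) L.
Proof. intros H1 H2. apply HasD_density. unfold HasD.
  apply (is_lim_seq_ext (fun N => sumR (fun k => ratio (Q k) N) L)).
  { intros N. unfold ratio. rewrite (cnt_sum P Q L N H1). unfold Rdiv. rewrite sumR_scal_r. auto. }
  apply lim_sumR. intros k Hk. destruct (H2 k Hk) as [x Hx]. rewrite (HasD_density _ _ Hx). auto. Qed.

Lemma ind_sum_Z (d c : Z) a n :
  sumR (fun k => ind (Z.eqb d (c - Z.of_nat k))) (seq a n) =
  ind ((c - Z.of_nat (a + n) <? d)%Z && (d <=? c - Z.of_nat a)%Z).
Proof. revert a. induction n; intros a.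
  - cbn [seq]. rewrite sumR_nil. unfold ind. rewrite Nat.add_0_r.
    destruct (Z.ltb_spec (c - Z.of_nat a) d), (Z.leb_spec d (c - Z.of_nat a)); simpl; auto; lia.
  - rewrite sumR_seq_first, IHn. unfold ind.
    destruct (Z.eqb_spec d (c - Z.of_nat a)), (Z.ltb_spec (c - Z.of_nat (S a + n)) d), (Z.leb_spec d (c - Z.of_nat (S a)));
    destruct (Z.ltb_spec (c - Z.of_nat (a + S n)) d), (Z.leb_spec d (c - Z.of_nat a)); simpl; try ring; lia. Qed.

Lemma c_sum lam t : In t (block lam) ->
  c t = sumR (fun k => delta (Z.of_nat (lam + 1) - Z.of_nat k) t) (seq 0 (lam + 2)).
Proof. intros Ht. apply in_block in Ht. unfold c. apply density_sum.
  - intros n. unfold Pk. rewrite ind_sum_Z. f_equal.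
    pose proof (dd_le n t). pose proof (s_t_bound lam t ltac:(lia)). unfold dd in *.
    destruct (Nat.leb_spec (s n) (s (n + t))), (Z.ltb_spec (Z.of_nat (lam + 1) - Z.of_nat (0 + (lam + 2))) (Z.of_nat (s (n + t)) - Z.of_nat (s n))),
      (Z.leb_spec (Z.of_nat (s (n + t)) - Z.of_nat (s n)) (Z.of_nat (lam + 1) - Z.of_nat 0)); simpl; auto; lia.
  - intros k _. eexists. apply delta_HasD. Qed.

Lemma ct_sum lam t : In t (block lam) ->
  ct t = sumR (fun k => delta (Z.of_nat (lam + 1) - Z.of_nat k) t) (seq 0 (lam + 1)).
Proof. intros Ht. apply in_block in Ht. unfold ct. apply density_sum.
  - intros n. unfold Pk. rewrite ind_sum_Z. f_equal.
    pose proof (dd_le n t). pose proof (s_t_bound lam t ltac:(lia)). unfold dd in *.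
    destruct (Nat.ltb_spec (s n) (s (n + t))), (Z.ltb_spec (Z.of_nat (lam + 1) - Z.of_nat (0 + (lam + 1))) (Z.of_nat (s (n + t)) - Z.of_nat (s n))),
      (Z.leb_spec (Z.of_nat (s (n + t)) - Z.of_nat (s n)) (Z.of_nat (lam + 1) - Z.of_nat 0)); simpl; auto; lia.
  - intros k _. eexists. apply delta_HasD. Qed.

Lemma sq_sum (cc : nat -> R) lam m :
  (forall t, In t (block lam) -> cc t = sumR (fun k => delta (Z.of_nat (lam + 1) - Z.of_nat k) t) (seq 0 m)) ->
  sumR (fun t => cc t ^ 2) (block lam) = / 4 ^ lam * sumR (fun k => sumR (fun l => a lam k l) (seq 0 m)) (seq 0 m).
Proof. intros H.
  rewrite (sumR_ext_in _ (fun t => sumR (fun k => sumR (fun l => delta (Z.of_nat (lam + 1) - Z.of_nat k) t *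
       delta (Z.of_nat (lam + 1) - Z.of_nat l) t) (seq 0 m)) (seq 0 m))).
  2:{ intros t Ht. rewrite H by auto. unfold pow. rewrite Rmult_1_r, sumR_mult_sums. reflexivity. }
  unfold a.
  transitivity (/ 4 ^ lam * (4 ^ lam * sumR (fun k => sumR (fun l => sumR (fun t => delta (Z.of_nat (lam + 1) - Z.of_nat k) t *
       delta (Z.of_nat (lam + 1) - Z.of_nat l) t) (block lam)) (seq 0 m)) (seq 0 m))).
  2:{ f_equal. rewrite <- sumR_scal. apply sumR_ext; intros k. rewrite <- sumR_scal. reflexivity. }
  rewrite <- Rmult_assoc, Rinv_l, Rmult_1_l by (apply pow_nonzero; lra).
  rewrite sumR_swap. apply sumR_ext; intros k. rewrite sumR_swap. reflexivity. Qed.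

Theorem part2 : forall lam : nat,
     sumR (fun t => c t ^ 2) (block lam) =
       / 4 ^ lam * sumR (fun k => sumR (fun l => a lam k l) (seq 0 (lam + 2))) (seq 0 (lam + 2)).
Proof. intros lam. apply sq_sum. apply c_sum. Qed.

Theorem part3 : forall lam : nat,
     sumR (fun t => ct t ^ 2) (block lam) =
       / 4 ^ lam * sumR (fun k => sumR (fun l => a lam k l) (seq 0 (lam + 1))) (seq 0 (lam + 1)).
Proof. intros lam. apply sq_sum. apply ct_sum. Qed.

Definition Eser : fps := fun i j k => match i with O => 1 | S _ => 0 end.

Lemma finv_E : finv (fmul (fsub fone fY) (fsub fone fZ)) = Eser.
Proof. symmetry. apply finv_unique.
  - rewrite fmul_000. unfold fsub, fone, fconst, fY, fZ. lra.
  - transitivity (fadd (fsub (fsub Eser (fmul fY Eser)) (fmul fZ Eser)) (fmul fY (fmul fZ Eser))). ring.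
    rewrite !fY_dk, !fZ_dl. fext. unfold fsub, fadd, dk, dl, Eser, fone, fconst.
    destruct x, x0, x1; ring. Qed.

Lemma coef_div lam J K :
  coef (Agen / ((fone - fY) * (fone - fZ)))%FPS lam J K =
  sumR (fun k => sumR (fun l => a lam k l) (seq 0 (S K))) (seq 0 (S J)).
Proof. unfold coef, fdiv. rewrite finv_E, fmul_SS.
  rewrite (SS_ext_le lam _ (fun i1 => if Nat.eqb i1 lam then SS J (fun j1 => SS K (fun k1 => Agen lam j1 k1)) else 0)).
  - rewrite (SS_point lam lam). rewrite Nat.leb_refl, Nat.eqb_refl. reflexivity.
    intros x Hx. apply Nat.eqb_neq in Hx. rewrite Hx. auto.
  - intros i1 Hi1. destruct (Nat.eqb_spec i1 lam).
    + subst. rewrite Nat.sub_diag. apply SS_ext_le; intros; apply SS_ext_le; intros. unfold Eser. ring.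
    + apply SS_zero; intros; apply SS_zero; intros. replace (lam - i1)%nat with (S (lam - i1 - 1)) by lia.
      unfold Eser. ring. Qed.

Theorem part4 : forall lam : nat,
     / 2 ^ lam * sumR (fun t => c t ^ 2) (block lam) =
       / 8 ^ lam * coef (Agen / ((fone - fY) * (fone - fZ)))%FPS lam (lam + 1) (lam + 1).
Proof. intros lam. rewrite part2, coef_div. replace (S (lam + 1)) with (lam + 2)%nat by lia.
  replace (8 ^ lam) with (2 ^ lam * 4 ^ lam) by (rewrite <- Rpow_mult_distr; f_equal; ring).
  rewrite Rinv_mult. ring. Qed.

Theorem part5 : forall lam : nat,
     / 2 ^ lam * sumR (fun t => ct t ^ 2) (block lam) =
       / 8 ^ lam * coef (Agen / ((fone - fY) * (fone - fZ)))%FPS lam lam lam.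
Proof. intros lam. rewrite part3, coef_div. replace (S lam) with (lam + 1)%nat by lia.
  replace (8 ^ lam) with (2 ^ lam * 4 ^ lam) by (rewrite <- Rpow_mult_distr; f_equal; ring).
  rewrite Rinv_mult. ring. Qed.



Theorem lemma4p2 :
  (forall lam k l : nat, coef Agen lam k l = coef Aclosed lam k l) /\
  (forall lam : nat,
     sumR (fun t => c t ^ 2) (block lam) =
       / 4 ^ lam * sumR (fun k => sumR (fun l => a lam k l) (seq 0 (lam + 2)))
                        (seq 0 (lam + 2))) /\
  (forall lam : nat,
     sumR (fun t => ct t ^ 2) (block lam) =
       / 4 ^ lam * sumR (fun k => sumR (fun l => a lam k l) (seq 0 (lam + 1)))
                        (seq 0 (lam + 1))) /\
  (forall lam : nat,
     / 2 ^ lam * sumR (fun t => c t ^ 2) (block lam) =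
       / 8 ^ lam * coef (Agen / ((fone - fY) * (fone - fZ)))%FPS lam (lam + 1) (lam + 1)) /\
  (forall lam : nat,
     / 2 ^ lam * sumR (fun t => ct t ^ 2) (block lam) =
       / 8 ^ lam * coef (Agen / ((fone - fY) * (fone - fZ)))%FPS lam lam lam).
Proof.
  split; [exact part1|]. split; [exact part2|]. split; [exact part3|]. split; [exact part4|exact part5].
Qed.
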